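(* Let $R$ be an associative ring. Then $R$ is both left locally unital and right locally unital if and only if for every $n\in\mathbb{N}$ and all $r_1,\ldots,r_n \in R$ there is an idempotent $e \in R$ with $e r_i = r_i e = r_i$ for all $i \in\{1,\ldots,n\}$.
   Context: Rings are associative, not necessarily unital. $R$ is called left (right) locally unital if for every $n \in \mathbb{N}$ and all $r_1,\ldots,r_n\in R$ there is an idempotent $e\in R$ (i.e. $e^2=e$) such that $e r_i = r_i$ (respectively $r_i e = r_i$) for all $i\in\{1,\ldots,n\}$. *)

(* Defs.v *)
(* Rings are NOT assumed unital, so we cannot use MathComp's
   ring structures (which have a 1). *)
From HB Require Import structures.
From mathcomp Require Import all_boot all_order all_algebra.
Set Implicit Arguments. Unset Strict Implicit. Unset Printing Implicit Defensive.
Import GRing.Theory.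
Local Open Scope ring_scope.

Definition assoc_ring_axioms (R : zmodType) (mul : R -> R -> R) : Prop :=
  [/\ (forall x y z, mul x (mul y z) = mul (mul x y) z),
      (forall x y z, mul (x + y) z = mul x z + mul y z) &
      (forall x y z, mul x (y + z) = mul x y + mul x z)].

Definition idempotent_el (R : Type) (mul : R -> R -> R) (e : R) : Prop :=
  mul e e = e.

Definition left_locally_unital (R : Type) (mul : R -> R -> R) : Prop :=
  forall (n : nat) (r : 'I_n -> R),
    exists e : R, idempotent_el mul e /\ (forall i, mul e (r i) = r i).

Definition right_locally_unital (R : Type) (mul : R -> R -> R) : Prop :=
  forall (n : nat) (r : 'I_n -> R),
    exists e : R, idempotent_el mul e /\ (forall i, mul (r i) e = r i).

(* Main.v *)
Require Import Defs.
From HB Require Import structures.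
From mathcomp Require Import all_boot all_order all_algebra.
Import GRing.Theory.
Local Open Scope ring_scope.

Theorem mainTheorem7 (R : zmodType) (mul : R -> R -> R)
  (hR : assoc_ring_axioms mul) :
  (left_locally_unital mul /\ right_locally_unital mul) <->
  (forall (n : nat) (r : 'I_n -> R),
     exists e : R, idempotent_el mul e /\
       (forall i, mul e (r i) = r i /\ mul (r i) e = r i)).
Proof.
case: hR => mA mDl mDr.
have mBr : forall x y z, mul x (y - z) = mul x y - mul x z.
  move=> x y z; apply/eqP; rewrite eq_sym subr_eq -mDr subrK //.
have mBl : forall x y z, mul (y - z) x = mul y x - mul z x.
  move=> x y z; apply/eqP; rewrite eq_sym subr_eq -mDl subrK //.
split; last first.
  move=> H; split=> n r; have [e [ie he]] := H n r; exists e; split=> // i;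
  by case: (he i).
case=> HL HR n r.
have [e [ie he]] := HL n r.
pose r' (i : 'I_n.+1) := if unlift ord_max i is Some j then r j else e.
have [f [iff hf]] := HR n.+1 r'.
have fr : forall j, mul (r j) f = r j.
  move=> j; have := hf (lift ord_max j); by rewrite /r' liftK.
have ef : mul e f = e by have := hf ord_max; rewrite /r' unlift_none.
exists (e + f - mul f e).
have eg : mul e (e + f - mul f e) = e.
  by rewrite mBr mDr ie ef mA ef ie addrK.
have fg : mul f (e + f - mul f e) = f.
  by rewrite mBr mDr mA iff addrAC subrr add0r.
split.
  rewrite /idempotent_el mBl !mDl eg fg -mA eg //.
move=> i; split.
  by rewrite mBl !mDl he -mA he addrK.
by rewrite mBr mDr fr mA fr addrAC subrr add0r.
Qed.
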